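(* Let $n\ge 2$ and let $\mathcal{P}_E(SD_{8n})$ be the enhanced power graph of the semidihedral group $SD_{8n}$. Put $\alpha=8n-1$, $\beta=6n-1$, $\gamma=4n-1$, and let $Q$ be the $(n+4)\times(n+4)$ matrix with rows and columns indexed by $1,\dots,n+4$ given by: row $1$: $Q_{11}=0$, $Q_{12}=\sqrt{\alpha^2+\beta^2}$, $Q_{13}=(4n-2)\sqrt{\alpha^2+\gamma^2}$, $Q_{1j}=2\sqrt{\alpha^2+9}$ for $4\le j\le n+3$, $Q_{1,n+4}=2n\sqrt{\alpha^2+1}$; row $2$: $Q_{21}=\sqrt{\alpha^2+\beta^2}$, $Q_{22}=0$, $Q_{23}=(4n-2)\sqrt{\beta^2+\gamma^2}$, $Q_{2j}=2\sqrt{\beta^2+9}$ for $4\le j\le n+3$, $Q_{2,n+4}=0$; row $3$: $Q_{31}=\sqrt{\alpha^2+\gamma^2}$, $Q_{32}=\sqrt{\beta^2+\gamma^2}$, $Q_{33}=(4n-3)(4n-1)\sqrt2$, all other entries $0$; row $i$ for $4\le i\le n+3$: $Q_{i1}=\sqrt{\alpha^2+9}$, $Q_{i2}=\sqrt{\beta^2+9}$, $Q_{ii}=3\sqrt2$, all other entries $0$; row $n+4$: $Q_{n+4,1}=\sqrt{\alpha^2+1}$, all other entries $0$. Then the Sombor spectrum of $\mathcal{P}_E(SD_{8n})$ consists of $-(4n-1)\sqrt2$ with multiplicity $4n-3$, $0$ with multiplicity $2n-1$, $-3\sqrt2$ with multiplicity $n$, together with the eigenvalues (with multiplicity) of $Q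$.
   Context: For a finite simple graph $\Gamma$ with vertices $u_1,\dots,u_N$, the Sombor matrix $S(\Gamma)$ has $(i,j)$ entry $\sqrt{\deg(u_i)^2+\deg(u_j)^2}$ if $u_i,u_j$ are adjacent and $0$ otherwise; the Sombor spectrum is the multiset of its eigenvalues. $SD_{8n}=\langle a,b: a^{4n}=b^2=e,\ ba=a^{2n-1}b\rangle$ of order $8n$. The enhanced power graph $\mathcal{P}_E(G)$ of a group $G$ has vertex set $G$, two distinct vertices being adjacent iff both belong to a common cyclic subgroup of $G$. *)

(* Defs.v *)
From HB Require Import structures.
From mathcomp Require Import all_boot all_order all_algebra all_fingroup.
Set Implicit Arguments. Unset Strict Implicit. Unset Printing Implicit Defensive.
Import Order.TTheory GRing.Theory Num.Theory.

Definition enh_power_adj (gT : finGroupType) (x y : gT) : bool :=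
  (x != y) && [exists z : gT, (x \in <[z]>%g) && (y \in <[z]>%g)].

Definition gdeg (T : finType) (e : rel T) (u : T) : nat := #|[set v | e u v]|.

Local Open Scope ring_scope.

Definition sombor_matrix (R : rcfType) (T : finType) (e : rel T) : 'M[R]_#|T| :=
  \matrix_(i, j)
    (if e (enum_val i) (enum_val j)
     then Num.sqrt ((gdeg e (enum_val i))%:R ^+ 2 + (gdeg e (enum_val j))%:R ^+ 2)
     else 0).

(* The (n+4)x(n+4) matrix Q of the paper, indices shifted to 0-based:
   paper index k corresponds to ordinal k-1. *)
Definition Qmat (R : rcfType) (n : nat) : 'M[R]_(n + 4) :=
  let al : R := (8 * n - 1)%:R in
  let be : R := (6 * n - 1)%:R in
  let ga : R := (4 * n - 1)%:R in
  let s (x y : R) := Num.sqrt (x ^+ 2 + y ^+ 2) in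
  \matrix_(i, j)
    (let i' := nat_of_ord i in let j' := nat_of_ord j in
     if i' == 0%N then
       (if j' == 0%N then 0
        else if j' == 1%N then s al be
        else if j' == 2%N then (4 * n - 2)%:R * s al ga
        else if (3 <= j' <= n + 2)%N then 2 * s al 3
        else n.*2%:R * s al 1)
     else if i' == 1%N then
       (if j' == 0%N then s al be
        else if j' == 1%N then 0
        else if j' == 2%N then (4 * n - 2)%:R * s be ga
        else if (3 <= j' <= n + 2)%N then 2 * s be 3
        else 0)
     else if i' == 2%N then
       (if j' == 0%N then s al ga
        else if j' == 1%N then s be ga
        else if j' == 2%N then ((4 * n - 3) * (4 * n - 1))%:R * Num.sqrt 2
        else 0)
     else if (i' <= n + 2)%N then
       (if j' == 0%N then s al 3
        else if j' == 1%N then s be 3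
        else if j' == i' then 3 * Num.sqrt 2
        else 0)
     else
       (if j' == 0%N then s al 1 else 0)).

(* Main.v *)
Require Import Defs.
From HB Require Import structures.
From mathcomp Require Import all_boot all_order all_algebra all_fingroup.
From mathcomp Require Import cyclic zify.
Set Implicit Arguments. Unset Strict Implicit. Unset Printing Implicit Defensive.
Import Order.TTheory GRing.Theory Num.Theory.

Definition cellN (n i : nat) (s : bool) : nat :=
  if s then (if i %% 2 == 1 then (if i < 2 * n then i else i - 2 * n) %/ 2 + 3 else n + 3)
  else if i == 0 then 0 else if i == 2 * n then 1 else 2.

Definition Acell n (c c' : nat) : bool :=
  [|| c == 0, c' == 0, (c <= 2) && (c' <= 2), (c == 1) && (3 <= c' <= n+2),
      (c' == 1) && (3 <= c <= n+2) | (c == c') && (3 <= c <= n+2)].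

Definition ptn n l := if l < 2 * n then l + 2 * n else l - 2 * n.

Lemma sum_eqc N (c : nat) : (\sum_(i < N) (i == c :> nat))%N = (c < N).
Proof.
rewrite -(big_mkord xpredT (fun i => (i == c) : nat)).
elim: N => [|N IH]; first by rewrite big_geq.
by rewrite big_nat_recr //= IH; lia.
Qed.

Lemma sum_odd m : (\sum_(i < 2 * m) (i %% 2 == 1))%N = m.
Proof.
rewrite -(big_mkord xpredT (fun i => (i %% 2 == 1) : nat)).
elim: m => [|m IH]; first by rewrite big_geq.
rewrite (_ : 2 * m.+1 = (2 * m).+2)%N; last by lia.
by rewrite !big_nat_recr //= IH; lia.
Qed.

Lemma sum_even m : (\sum_(i < 2 * m) (i %% 2 == 0))%N = m.
Proof.
rewrite -(big_mkord xpredT (fun i => (i %% 2 == 0) : nat)).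
elim: m => [|m IH]; first by rewrite big_geq.
rewrite (_ : 2 * m.+1 = (2 * m).+2)%N; last by lia.
by rewrite !big_nat_recr //= IH; lia.
Qed.

Lemma sum_one N : (\sum_(i < N) 1)%N = N.
Proof. by rewrite sum1_card card_ord. Qed.

Section Grp.
Variables (n : nat) (gT : finGroupType) (a b : gT).
Hypotheses (n2 : (2 <= n)%N) (cardG : #|gT| = (8 * n)%N)
  (gen : <<[set a; b]>>%g = [set: gT]) (a4n : (a ^+ (4 * n) = 1)%g) (b2 : (b ^+ 2 = 1)%g)
  (ba : (b * a = a ^+ (2 * n - 1) * b)%g).
Local Open Scope group_scope.

Lemma bV : b^-1 = b.
Proof. by rewrite -[b^-1]mulg1 -b2 expgS expg1 mulKg. Qed.

Lemma bb : b * b = 1.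
Proof. by rewrite -b2 expgS expg1. Qed.

Lemma bnorm : b \in 'N(<[a]>).
Proof.
apply/normP; apply/eqP; rewrite eqEcard cardJg leqnn andbT -cycleJ cycle_subG.
by rewrite /conjg bV mulgA ba -mulgA bb mulg1 mem_cycle.
Qed.

Lemma genG : [set: gT] = <[a]> * <[b]>.
Proof.
rewrite -gen -joingE -joing_idl -joing_idr norm_joinEr //.
by rewrite cycle_subG bnorm.
Qed.

Lemma ords : #[a] = (4 * n)%N /\ #[b] = 2%N /\ <[a]> :&: <[b]> = 1.
Proof.
have := mul_cardG <[a]> <[b]>; rewrite -genG cardsT cardG.
have ha : (#[a] <= 4 * n)%N.
  by apply: dvdn_leq; [lia | rewrite order_dvdn a4n].
have hb : (#[b] <= 2)%N by apply: dvdn_leq; [lia | rewrite order_dvdn b2].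
have hi : (0 < #|<[a]> :&: <[b]>|)%N by exact: (cardG_gt0 (<[a]> :&: <[b]>)%G).
move=> e0.
have e : (#[a] * #[b] = 8 * n * #|<[a]> :&: <[b]>|)%N := e0.
have hab := leq_mul ha hb.
have h1 : #|<[a]> :&: <[b]>| = 1%N by nia.
rewrite h1 muln1 in e.
have ha0 : (0 < #[a])%N by exact: order_gt0.
have hb0 : (0 < #[b])%N by exact: order_gt0.
split; first by nia. split; first by nia.
by apply/eqP; rewrite trivg_card1 h1.
Qed.

Lemma orda : #[a] = (4 * n)%N. Proof. by case: ords. Qed.
Lemma ordb : #[b] = 2%N. Proof. by case: ords => _ []. Qed.
Lemma triv : <[a]> :&: <[b]> = 1. Proof. by case: ords => _ []. Qed.

Definition phi (i : nat) (s : bool) : gT := a ^+ i * (if s then b else 1).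

Lemma a_mod i : a ^+ i = a ^+ (i %% (4 * n)).
Proof. by rewrite -orda expg_mod_order. Qed.

Lemma phi_surj g : exists i s, (i < 4 * n)%N /\ g = phi i s.
Proof.
have : g \in <[a]> * <[b]> by rewrite -genG inE.
case/mulsgP => x y /cycleP[i ->] /cycleP[j ->] ->.
exists (i %% (4 * n))%N, (odd j); split; first by rewrite ltn_mod; lia.
rewrite /phi -a_mod; congr (_ * _); rewrite -(expg_mod j b2) modn2.
by case: (odd j); rewrite ?expg1 ?expg0.
Qed.

Lemma phi_inj i j s t : (i < 4 * n)%N -> (j < 4 * n)%N -> phi i s = phi j t -> i = j /\ s = t.
Proof.
move=> hi hj; rewrite /phi => e.
set Bs := (if s then b else 1) in e *; set Bt := (if t then b else 1) in e *.
have h : (a ^+ j)^-1 * a ^+ i = Bt * Bs^-1.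
  by rewrite -(mulgK Bs (a ^+ i)) e -!mulgA mulKg.
have hm : (a ^+ j)^-1 * a ^+ i \in <[a]> :&: <[b]>.
  rewrite inE {2}h groupM ?groupV ?mem_cycle //=.
  by rewrite groupM ?groupV // /Bs /Bt; [case: (t) | case: (s)]; rewrite ?group1 ?cycle_id.
rewrite triv inE -eq_mulVg1 eq_expg_mod_order orda !modn_small // in hm.
move/eqP: hm => ij; split => //.
move: h; rewrite ij mulVg => /esym /eqP; rewrite -eq_mulgV1.
rewrite /Bs /Bt; clear Bs Bt e; move: ordb; case: s; case: t => //= ob; rewrite ?(eq_sym 1) -order_eq1 ob.
by []. by []. Qed.

Definition code (g : gT) : nat * bool :=
  if [pick u : 'I_(4 * n) * bool | phi u.1 u.2 == g] is Some u then (val u.1, u.2)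
  else (0%N, false).

Lemma code_spec g : ((code g).1 < 4 * n)%N /\ phi (code g).1 (code g).2 = g.
Proof.
rewrite /code; case: pickP => [u /eqP <- | none]; first by split => //=; exact: ltn_ord.
exfalso; have [i [s [hi e]]] := phi_surj g.
by have := none (Ordinal hi, s); rewrite /= -e eqxx.
Qed.

Lemma code_phi i s : (i < 4 * n)%N -> code (phi i s) = (i, s).
Proof.
move=> hi; move: (code_spec (phi i s)); case: (code (phi i s)) => i' s' /= [h1 h2].
by have [-> ->] := phi_inj h1 hi h2.
Qed.

Lemma codeK g : phi (code g).1 (code g).2 = g.
Proof. by case: (code_spec g). Qed.

Lemma code_lt g : ((code g).1 < 4 * n)%N.
Proof. by case: (code_spec g). Qed.

Lemma count_code (P : nat -> bool -> bool) :
  #|[set g | P (code g).1 (code g).2]| = (\sum_(i < 4 * n) (P i true + P i false))%N.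
Proof.
rewrite -sum1_card (reindex (fun u : 'I_(4 * n) * bool => phi u.1 u.2)) /=; last first.
  apply: onW_bij; exists (fun g => (Ordinal (code_lt g), (code g).2)).
    move=> [i s] /=; apply: injective_projections => /=.
      by apply: val_inj => /=; rewrite code_phi.
    by rewrite code_phi.
  by move=> g /=; exact: codeK.
rewrite (eq_bigl (fun u : 'I_(4 * n) * bool => P u.1 u.2)); last first.
  by move=> [i s]; rewrite inE /= code_phi.
rewrite big_mkcond /= -(pair_bigA _ (fun (i : 'I_(4 * n)) (s : bool) => (P i s : nat))) /=.
apply: eq_bigr => i _; rewrite big_bool /=.
by [].
Qed.

Definition cellG g := cellN n (code g).1 (code g).2.
Definition CN c := #|[set g | cellG g == c]|.

Lemma CN0 : CN 0 = 1%N.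
Proof.
rewrite /CN /cellG (count_code (fun i s => cellN n i s == 0)).
rewrite (eq_bigr (fun i : 'I_(4 * n) => (i == 0 :> nat) : nat)); last first.
  by move=> i _; rewrite /cellN; do ! case: ifPn; move=> *; lia.
by rewrite sum_eqc; lia.
Qed.

Lemma CN1 : CN 1%N = 1%N.
Proof.
rewrite /CN /cellG (count_code (fun i s => cellN n i s == 1%N)).
rewrite (eq_bigr (fun i : 'I_(4 * n) => (i == 2 * n :> nat)%N : nat)); last first.
  by move=> i _; rewrite /cellN; do ! case: ifPn; move=> *; lia.
by rewrite sum_eqc; lia.
Qed.

Lemma CN2 : CN 2%N = (4 * n - 2)%N.
Proof.
rewrite /CN /cellG (count_code (fun i s => cellN n i s == 2)).
have : (\sum_(i < 4 * n) (((cellN n i true == 2) + (cellN n i false == 2)) + ((i == 0 :> nat) + (i == 2 * n :> nat))))%N = (4 * n)%N.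
  rewrite -[RHS]sum_one; apply: eq_bigr => i _.
  by rewrite /cellN; do ! case: ifPn; move=> *; lia.
rewrite !big_split /= !sum_eqc; lia.
Qed.

Lemma CNp j : (j < n)%N -> CN (j + 3) = 2%N.
Proof.
move=> jn; rewrite /CN /cellG (count_code (fun i s => cellN n i s == j + 3)).
rewrite (eq_bigr (fun i : 'I_(4 * n) => ((i == 2 * j + 1 :> nat) + (i == 2 * j + 1 + 2 * n :> nat))%N)); last first.
  move=> i _; have := ltn_ord i.
  by rewrite /cellN; do ! case: ifPn; move=> *; lia.
by rewrite big_split /= !sum_eqc; lia.
Qed.

Lemma CNl : CN (n + 3) = (2 * n)%N.
Proof.
rewrite /CN /cellG (count_code (fun i s => cellN n i s == n + 3)).
rewrite (eq_bigr (fun i : 'I_(4 * n) => (i %% 2 == 0 :> nat)%N : nat)); last first.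
  move=> i _; have := ltn_ord i.
  by rewrite /cellN; do ! case: ifPn; move=> *; lia.
rewrite (_ : (4 * n = 2 * (2 * n))%N); last by lia.
by rewrite sum_even.
Qed.

Lemma bpow i : b * a ^+ i = a ^+ (i * (2 * n - 1)) * b.
Proof.
elim: i => [|i IH]; first by rewrite mul0n !expg0 mulg1 mul1g.
rewrite expgSr mulgA IH -mulgA ba mulgA -expgD; congr (a ^+ _ * b).
by rewrite mulSn addnC.
Qed.

Lemma aexp_4n q r : a ^+ (4 * n * q + r) = a ^+ r.
Proof. by rewrite expgD expgM a4n expg1n mul1g. Qed.

Lemma zsq l : (phi l true) ^+ 2 = a ^+ (2 * n * l).
Proof.
rewrite /phi expgS expg1 -mulgA (mulgA b) bpow -mulgA bb mulg1 -expgD.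
congr (a ^+ _); nia.
Qed.

Lemma zsq_odd l : (l %% 2 == 1)%N -> a ^+ (2 * n * l) = a ^+ (2 * n).
Proof.
move=> h; rewrite (divn_eq l 2) (eqP h).
rewrite (_ : (2 * n * (l %/ 2 * 2 + 1) = 4 * n * (l %/ 2) + 2 * n)%N) ?aexp_4n //; nia.
Qed.

Lemma zsq_even l : (l %% 2 == 0)%N -> a ^+ (2 * n * l) = 1.
Proof.
move=> h; rewrite (divn_eq l 2) (eqP h).
rewrite (_ : (2 * n * (l %/ 2 * 2 + 0) = 4 * n * (l %/ 2) + 0)%N) ?aexp_4n ?expg0 //; nia.
Qed.

Lemma zcube l : (l < 4 * n)%N -> a ^+ (2 * n) * phi l true = phi (ptn n l) true.
Proof.
move=> hl; rewrite /phi mulgA -expgD /ptn; case: ifPn => h.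
  by rewrite addnC.
rewrite (_ : (2 * n + l = 4 * n * 1 + (l - 2 * n))%N) ?aexp_4n //; lia.
Qed.

Lemma z4 l : (phi l true) ^+ 4 = 1.
Proof.
rewrite (_ : 4 = 2 * 2)%N // expgM zsq -expgM.
by rewrite (_ : (2 * n * l * 2 = 4 * n * l + 0)%N) ?aexp_4n ?expg0 //; nia.
Qed.

Lemma mem_cycz l x : (l < 4 * n)%N -> x \in <[phi l true]> ->
  [|| x == 1, x == phi l true, (l %% 2 == 1)%N && (x == a ^+ (2 * n))
    | (l %% 2 == 1)%N && (x == phi (ptn n l) true)].
Proof.
move=> hl /cycleP[k ->]; rewrite -(expg_mod k (z4 l)).
have : (k %% 4 < 4)%N by rewrite ltn_mod.
move: (k %% 4)%N => r; case: r => [|[|[|[|r]]]] // _.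
- by rewrite expg0 eqxx.
- by rewrite expg1 eqxx orbT.
- rewrite zsq; have [h|h] := boolP (l %% 2 == 1)%N.
    by rewrite zsq_odd // eqxx !orbT.
  by rewrite zsq_even ?eqxx //; lia.
- rewrite expgSr zsq; have [h|h] := boolP (l %% 2 == 1)%N.
    by rewrite zsq_odd // zcube // eqxx !orbT.
  by rewrite zsq_even ?mul1g ?eqxx ?orbT //; lia.
Qed.

Lemma phi0 : phi 0 false = 1. Proof. by rewrite /phi expg0 mulg1. Qed.
Lemma phiF i : phi i false = a ^+ i. Proof. by rewrite /phi mulg1. Qed.

Lemma cell_phi i s : (i < 4 * n)%N -> cellG (phi i s) = cellN n i s.
Proof. by move=> hi; rewrite /cellG code_phi. Qed.

Lemma cell1 : cellG 1 = 0%N.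
Proof. by rewrite -phi0 cell_phi //; lia. Qed.

Lemma cella2n : cellG (a ^+ (2 * n)) = 1%N.
Proof. rewrite -phiF cell_phi; last by lia. by rewrite /cellN; do ! case: ifPn; move=> *; lia. Qed.

Lemma rot_code x : x \in <[a]> -> (code x).2 = false.
Proof.
case/cycleP => j ->; rewrite a_mod -phiF code_phi //; rewrite ltn_mod; lia.
Qed.

Lemma ptn_lt l : (l < 4 * n)%N -> (ptn n l < 4 * n)%N.
Proof. rewrite /ptn; case: ifPn; lia. Qed.

Lemma cell0P x : cellG x == 0%N -> x = 1.
Proof.
move: (code_lt x) (codeK x); rewrite /cellG; case: (code x) => i s /= hi <-.
case: s => h; first by exfalso; move: h; rewrite /cellN; do ! case: ifPn; move=> *; lia.
have -> : i = 0%N by move: h; rewrite /cellN; do ! case: ifPn; move=> *; lia.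
exact: phi0.
Qed.

Lemma cell1P x : cellG x == 1%N -> x = a ^+ (2 * n).
Proof.
move: (code_lt x) (codeK x); rewrite /cellG; case: (code x) => i s /= hi <-.
case: s => h; first by exfalso; move: h; rewrite /cellN; do ! case: ifPn; move=> *; lia.
have -> : i = (2 * n)%N by move: h; rewrite /cellN; do ! case: ifPn; move=> *; lia.
exact: phiF.
Qed.

Lemma cell2P x : (cellG x <= 2)%N -> x \in <[a]>.
Proof.
move: (code_lt x) (codeK x); rewrite /cellG; case: (code x) => i s /= hi <-.
case: s => h; first by exfalso; move: h; rewrite /cellN; do ! case: ifPn; move=> *; lia.
by rewrite phiF mem_cycle.
Qed.

Lemma cellpP x : (3 <= cellG x <= n + 2)%N ->
  exists l, [/\ (l < 4 * n)%N, (l %% 2 == 1)%N, cellG x = cellN n l true & x = phi l true].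
Proof.
move: (code_lt x) (codeK x); rewrite /cellG; case: (code x) => i s /= hi <-.
case: s => h; last by exfalso; move: h; rewrite /cellN; do ! case: ifPn; move=> *; lia.
exists i; split => //; move: h; rewrite /cellN; do ! case: ifPn; move=> *; lia.
Qed.

Lemma a2n_in l : (l %% 2 == 1)%N -> a ^+ (2 * n) \in <[phi l true]>.
Proof. by move=> h; rewrite -(zsq_odd h) -zsq mem_cycle. Qed.

Lemma adj_cell x y :
  enh_power_adj x y = (x != y) && Acell n (cellG x) (cellG y).
Proof.
rewrite /enh_power_adj; case: (eqVneq x y) => //= xy.
apply/existsP/idP.
- case=> z /andP[xz yz].
  rewrite -(codeK z) in xz yz; have hl := code_lt z.
  move: xz yz; set l := (code z).1; case: (code z).2 => xz yz.
  + have hx := mem_cycz hl xz; have hy := mem_cycz hl yz.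
    have hp := ptn_lt hl; move: xy.
    case/or4P: hx => [/eqP->| /eqP->| /andP[lo /eqP->] | /andP[lo /eqP->]];
    case/or4P: hy => [/eqP->| /eqP->| /andP[lo' /eqP->] | /andP[lo' /eqP->]];
    rewrite ?eqxx // => _;
    rewrite ?cell1 ?cella2n ?cell_phi //; rewrite /Acell /cellN /ptn;
    do ! case: ifPn; move=> *; lia.
  + have sub : <[phi l false]> \subset <[a]> by rewrite phiF cycleX.
    have cx := rot_code (subsetP sub _ xz); have cy := rot_code (subsetP sub _ yz).
    rewrite /cellG cx cy /Acell /cellN; do ! case: ifPn; move=> *; lia.
- move=> hA; move: hA; rewrite /Acell.
  case/orP=> [h|/orP[h|/orP[h|/orP[h|/orP[h|h]]]]].
  + by exists y; rewrite (cell0P h) group1 cycle_id.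
  + by exists x; rewrite (cell0P h) group1 cycle_id.
  + by exists a; case/andP: h => /cell2P -> /cell2P ->.
  + case/andP: h => /cell1P -> /cellpP [l [hl lo _ ->]].
    by exists (phi l true); rewrite cycle_id a2n_in.
  + case/andP: h => /cell1P -> /cellpP [l [hl lo _ ->]].
    by exists (phi l true); rewrite cycle_id a2n_in.
  + case/andP: h => /eqP exy /cellpP [i [hi io ci ex]].
    have := exy; rewrite ci => /esym cy.
    have : (3 <= cellG y <= n + 2)%N by rewrite cy; rewrite /cellN; move: io hi; do ! case: ifPn; move=> *; lia.
    case/cellpP => [j [hj jo cj ey]].
    have ij : i != j by apply: contraNneq xy => ij; rewrite ex ey ij.
    have jp : j = ptn n i.
      move: cy; rewrite cj /ptn /cellN; move: hi hj io jo ij; do ! case: ifPn; move=> *; lia.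
    exists x; rewrite cycle_id ey jp -zcube // -(zsq_odd io) -zsq ex -expgSr.
    exact: mem_cycle.
Qed.

Lemma cellG_lt x : (cellG x < n + 4)%N.
Proof.
move: (code_lt x); rewrite /cellG; case: (code x) => i s /= hi.
by rewrite /cellN; case: s; do ! case: ifPn; move=> *; lia.
Qed.

Definition dN (c : nat) : nat :=
  if c == 0%N then (8 * n - 1)%N else if c == 1%N then (6 * n - 1)%N
  else if c == 2%N then (4 * n - 1)%N else if (c <= n + 2)%N then 3%N else 1%N.

Lemma sum_ptw (f g : nat -> nat) : (forall i, (i < 4 * n)%N -> f i = g i) ->
  (\sum_(i < 4 * n) f i)%N = (\sum_(i < 4 * n) g i)%N.
Proof. by move=> h; apply: eq_bigr => i _; apply: h. Qed.

Lemma deg_cell x : gdeg (@enh_power_adj gT) x = dN (cellG x).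
Proof.
rewrite /gdeg.
have -> : [set v | enh_power_adj x v] = [set v | Acell n (cellG x) (cellG v)] :\ x.
  by apply/setP => v; rewrite !inE adj_cell eq_sym.
have := cardsD1 x [set v | Acell n (cellG x) (cellG v)]; rewrite inE.
rewrite /cellG (count_code (fun i s => Acell n (cellN n (code x).1 (code x).2) (cellN n i s))) -/(cellG x).
have hc := cellG_lt x.
set K := #|_ :\ x|; clearbody K; move: (cellG x) hc => c hc.
rewrite /dN; case: ifPn => [/eqP-> | c0].
  rewrite (eq_bigr (fun i : 'I_(4 * n) => (1 + 1)%N)); last first.
    by move=> i _; have hi := ltn_ord i; rewrite /Acell /cellN; do ! case: ifPn; move=> *; lia.
  by rewrite big_split /= sum_one /Acell; lia.
case: ifPn => [/eqP-> | c1].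
  rewrite (eq_bigr (fun i : 'I_(4 * n) => ((i %% 2 == 1) + 1)%N)); last first.
    by move=> i _; have hi := ltn_ord i; rewrite /Acell /cellN; do ! case: ifPn; move=> *; lia.
  rewrite big_split /= sum_one (_ : (4 * n = 2 * (2 * n))%N); last by lia.
  by rewrite sum_odd /Acell; lia.
case: ifPn => [/eqP-> | c2].
  rewrite (eq_bigr (fun i : 'I_(4 * n) => 1%N)); last first.
    by move=> i _; have hi := ltn_ord i; rewrite /Acell /cellN; do ! case: ifPn; move=> *; lia.
  by rewrite sum_one /Acell; lia.
case: ifPn => [cp | cp].
  have [j -> jn] : exists2 j, c = (j + 3)%N & (j < n)%N by exists (c - 3)%N; lia.
  rewrite (eq_bigr (fun i : 'I_(4 * n) => (((i == 2 * j + 1 :> nat) + (i == 2 * j + 1 + 2 * n :> nat)) + ((i == 0 :> nat) + (i == 2 * n :> nat)))%N)); last first.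
    by move=> i _; have hi := ltn_ord i; rewrite /Acell /cellN; do ! case: ifPn; move=> *; lia.
  by rewrite !big_split /= !sum_eqc /Acell; lia.
have -> : c = (n + 3)%N by lia.
rewrite (eq_bigr (fun i : 'I_(4 * n) => ((i == 0 :> nat) : nat))); last first.
  by move=> i _; have hi := ltn_ord i; rewrite /Acell /cellN; do ! case: ifPn; move=> *; lia.
by rewrite sum_eqc; rewrite /Acell; lia.
Qed.
End Grp.

Local Open Scope ring_scope.

Lemma char_poly_conj (F : fieldType) n (P B : 'M[F]_n) : P \in unitmx ->
  char_poly (invmx P *m B *m P) = char_poly B.
Proof.
move=> uP; rewrite /char_poly /char_poly_mx.
rewrite !map_mxM map_invmx.
have uPC : map_mx polyC P \in unitmx by rewrite map_unitmx.
have eX : ('X%:M : 'M_n) = invmx (map_mx polyC P) *m 'X%:M *m map_mx polyC P.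
  by rewrite scalar_mxC -mulmxA mulVmx // mulmx1.
rewrite {1}eX -mulmxBl -mulmxBr !det_mulmx mulrAC -det_mulmx mulVmx // det1 mul1r.
by [].
Qed.

Lemma simchar (F : fieldType) n1 n2 (e : n1 = n2) (P : 'M[F]_(n1, n2))
  (A : 'M_n2) (B : 'M_n1) :
  row_full P -> P *m A = B *m P -> char_poly A = char_poly B.
Proof.
case: n2 / e P A => P A.
rewrite row_full_unit => uP PA.
have -> : A = invmx P *m B *m P by rewrite -mulmxA -PA mulmxA mulVmx // mul1mx.
by rewrite char_poly_conj.
Qed.

Lemma char_poly_tr (R : comNzRingType) n (A : 'M[R]_n) :
  char_poly A^T = char_poly A.
Proof.
rewrite /char_poly -[RHS]det_tr; congr (\det _); rewrite /char_poly_mx.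
by rewrite linearB /= tr_scalar_mx map_trmx.
Qed.

Lemma char_poly_block (R : comNzRingType) n1 n2 (A : 'M[R]_n1) (B : 'M[R]_n2) :
  char_poly (block_mx A 0 0 B) = char_poly A * char_poly B.
Proof. by rewrite /char_poly char_block_diag_mx det_ublock. Qed.

Lemma char_poly_diag (R : comNzRingType) n (d : 'rV[R]_n) :
  char_poly (diag_mx d) = \prod_(i < n) ('X - (d 0 i)%:P).
Proof.
rewrite char_poly_trig ?diag_mx_is_trig //.
by apply: eq_bigr => i _; rewrite mxE eqxx.
Qed.

Lemma sum_enum (V : nmodType) (T : finType) (F : T -> V) :
  \sum_(j < #|T|) F (enum_val j) = \sum_u F u.
Proof.
rewrite (reindex enum_rank) /=; last first.
  by apply: onW_bij; exists enum_val; [exact: enum_rankK | exact: enum_valK].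
by apply: eq_bigr => u _; rewrite enum_rankK.
Qed.

Lemma sum_delta (R : pzSemiRingType) (T : finType) (P : pred T) (y : T) :
  \sum_(x | P x) ((x == y)%:R : R) = (P y)%:R.
Proof.
rewrite big_mkcond (bigD1 y) //= eqxx big1 ?addr0; first by case: (P y).
by move=> x /negbTE xy; rewrite xy; case: (P x).
Qed.

Lemma sum_deltaF (R : pzSemiRingType) (T : finType) (v : T) (F : T -> R) :
  \sum_u ((v == u)%:R * F u) = F v.
Proof.
rewrite (bigD1 v) //= eqxx mul1r big1 ?addr0 // => u /negbTE.
by rewrite eq_sym => ->; rewrite mul0r.
Qed.

Section Equit.
Variables (R : numFieldType) (T : finType) (k : nat) (W : T -> T -> R)
  (cell : T -> 'I_k) (rep : 'I_k -> T) (Q : 'M[R]_k) (lam : 'I_k -> R).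
Hypothesis repK : forall c, cell (rep c) = c.
Hypothesis Hsum : forall c g, \sum_(u | cell u == c) W u g = Q (cell g) c.
Hypothesis Heig : forall v g, v != rep (cell v) ->
  W v g - W (rep (cell v)) g = lam (cell v) * ((v == g)%:R - (rep (cell v) == g)%:R).

Let NR := [set v | v != rep (cell v)].

Lemma card_eq : (k + #|NR|)%N = #|T|.
Proof.
rewrite -(cardsC NR) addnC; congr (_ + _)%N.
have -> : ~: NR = [set rep c | c in [set: 'I_k]].
  apply/setP => v; rewrite !inE negbK; apply/eqP/imsetP => [-> | [c _ ->]].
    by exists (cell v); rewrite ?inE.
  by rewrite repK.
by rewrite card_imset ?cardsT ?card_ord //; exact: (can_inj repK).
Qed.

Let E (x : T) : 'rV[R]_#|T| := \row_i (x == enum_val i)%:R.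
Let P1 : 'M[R]_(k, #|T|) := \matrix_(c, i) (cell (enum_val i) == c)%:R.
Let P2 : 'M[R]_(#|NR|, #|T|) := \matrix_(j, i)
   ((enum_val j == enum_val i)%:R - (rep (cell (enum_val j)) == enum_val i)%:R).
Let S : 'M[R]_#|T| := \matrix_(i, j) W (enum_val i) (enum_val j).
Let d : 'rV[R]_#|NR| := \row_j lam (cell (enum_val j)).
Let P := col_mx P1 P2.

Lemma key_eq : P *m S = block_mx Q^T 0 0 (diag_mx d) *m P.
Proof.
rewrite /P mul_col_mx mul_block_col !mul0mx addr0 add0r; congr col_mx.
  apply/matrixP => c i; rewrite !mxE.
  under eq_bigr do rewrite !mxE.
  rewrite (sum_enum (fun u => (cell u == c)%:R * W u (enum_val i))).
  transitivity (Q (cell (enum_val i)) c).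
    rewrite -Hsum [RHS]big_mkcond /=; apply: eq_bigr => u _.
    by case: (cell u == c); rewrite ?mul1r ?mul0r.
  under [RHS]eq_bigr do rewrite !mxE.
  symmetry; rewrite (bigD1 (cell (enum_val i))) //= eqxx mulr1 big1 ?addr0 //.
  by move=> c' /negbTE; rewrite eq_sym => ->; rewrite mulr0.
apply/matrixP => j i; rewrite mul_diag_mx !mxE.
under eq_bigr do rewrite !mxE.
rewrite (sum_enum (fun u => ((enum_val j == u)%:R - (rep (cell (enum_val j)) == u)%:R)
   * W u (enum_val i))).
under eq_bigr do rewrite mulrBl.
rewrite sumrB !sum_deltaF Heig //.
by have := enum_valP j; rewrite inE.
Qed.

Lemma rowE y : (E y <= P)%MS.
Proof.
have F1 c : ((\sum_(x | cell x == c) E x)%R <= P)%MS.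
  apply: (eq_row_sub (lshift _ c)); rewrite rowKu; apply/rowP => i.
  rewrite !mxE summxE; under [RHS]eq_bigr do rewrite mxE.
  by rewrite sum_delta.
have F2 v : v \in NR -> (E v - E (rep (cell v)) <= P)%MS.
  move=> vNR; apply: (eq_row_sub (rshift _ (enum_rank_in vNR v))).
  rewrite rowKd; apply/rowP => i; rewrite !mxE enum_rankK_in //.
have Hr c : (E (rep c) <= P)%MS.
  pose Sc := [set v | (cell v == c) && (v != rep c)].
  have e1 : \sum_(x | cell x == c) E x = E (rep c) + \sum_(x in Sc) E x.
    rewrite (bigD1 (rep c)) ?repK //=; congr (_ + _).
    by apply: eq_bigl => x; rewrite inE.
  have e2 : \sum_(x in Sc) (E x - E (rep c)) = \sum_(x in Sc) E x - E (rep c) *+ #|Sc|.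
    by rewrite sumrB sumr_const.
  have e3 : E (rep c) *+ #|Sc|.+1 =
      \sum_(x | cell x == c) E x - \sum_(x in Sc) (E x - E (rep c)).
    rewrite e1 e2 opprB mulrS addrA addrAC addrK addrC.
    by [].
  have -> : E (rep c) = (#|Sc|.+1%:R)^-1 *: (E (rep c) *+ #|Sc|.+1).
    by rewrite -scaler_nat scalerA mulVf ?scale1r // pnatr_eq0.
  apply: scalemx_sub; rewrite e3; apply: addmx_sub => //.
  rewrite -scaleN1r; apply: scalemx_sub; apply: summx_sub => v.
  rewrite inE => /andP[/eqP <- vr]; apply: F2; by rewrite inE.
have [xr | xNR] := eqVneq y (rep (cell y)); first by rewrite xr.
have -> : E y = (E y - E (rep (cell y))) + E (rep (cell y)) by rewrite subrK.
by apply: addmx_sub => //; apply: F2; rewrite inE.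
Qed.

Lemma equit_charpoly :
  char_poly S = char_poly Q * \prod_(v | v != rep (cell v)) ('X - (lam (cell v))%:P).
Proof.
rewrite (simchar card_eq _ key_eq); last first.
  rewrite -sub1mx; apply/row_subP => i.
  have -> : row i 1%:M = E (enum_val i).
    by apply/rowP => j; rewrite !mxE (inj_eq enum_val_inj).
  exact: rowE.
rewrite char_poly_block char_poly_tr char_poly_diag; congr (_ * _).
rewrite (eq_bigr (fun j => 'X - (lam (cell (enum_val j)))%:P)); last by move=> j _; rewrite /d mxE.
rewrite -(big_enum_val (fun v => 'X - (lam (cell v))%:P)).
by apply: eq_bigl => v; rewrite inE.
Qed.
End Equit.

Lemma equit2 (R : numFieldType) (T : finType) k (M : 'I_k -> 'I_k -> R)
    (cell : T -> 'I_k) (rep : 'I_k -> T) :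
  cancel rep cell ->
  char_poly (\matrix_(i, j) ((enum_val i != enum_val j)%:R
      * M (cell (enum_val i)) (cell (enum_val j))) : 'M_#|T|) =
  char_poly (\matrix_(r, c) ((#|[set u | cell u == c]| - (r == c))%:R * M c r) : 'M_k)
  * \prod_(c < k) ('X + (M c c)%:P) ^+ (#|[set u | cell u == c]|.-1).
Proof.
move=> repK.
rewrite (@equit_charpoly R T k (fun x y => (x != y)%:R * M (cell x) (cell y)) cell rep
  (\matrix_(r, c) ((#|[set u | cell u == c]| - (r == c))%:R * M c r)) (fun c => - M c c) repK); first last.
- move=> v g; rewrite -/(cell v) => vr.
  set r := rep (cell v).
  have cr : cell r = cell v by rewrite /r repK.
  rewrite cr.
  have [<-|vg] := eqVneq v g.
    have rv : (r == v) = false by rewrite eq_sym (negbTE vr).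
    by rewrite rv /= mul0r mul1r sub0r subr0 mulr1.
  have [<-|rg] := eqVneq r g.
    by rewrite /= cr mul0r mul1r subr0 sub0r mulrN1 opprK.
  by rewrite /= !mul1r !subrr mulr0.
- move=> c g; rewrite mxE.
  rewrite (eq_bigr (fun u => (u != g)%:R * M c (cell g))); last first.
    by move=> u /eqP ->.
  rewrite -mulr_suml; congr (_ * _).
  rewrite (eq_bigr (fun u => 1 - (u == g)%:R)); last first.
    by move=> u _; case: (u == g); rewrite ?subrr ?subr0.
  rewrite sumrB sum_delta sumr_const.
  have -> : #|[pred u | cell u == c]| = #|[set u | cell u == c]|.
    by apply: eq_card => u; rewrite inE.
  rewrite natrB; first by rewrite eq_sym.
  case: eqP => //= cg; rewrite card_gt0; apply/set0Pn; exists g; by rewrite inE cg.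
congr (_ * _).
rewrite (partition_big cell xpredT) //=; apply: eq_bigr => c _.
rewrite (eq_bigr (fun _ => 'X + (M c c)%:P)); last first.
  by move=> v /andP[_ /eqP ->]; rewrite polyCN opprK.
rewrite (eq_bigl (fun v => v \in [set u | cell u == c] :\ rep c)); last first.
  move=> v /=; rewrite !inE; case: (eqVneq (cell v) c) => [<-|]; rewrite ?andbT ?andbF //.
rewrite prodr_const (cardsD1 (rep c) [set u | cell u == c]) inE repK eqxx.
by [].
Qed.

Lemma big_split5 (R : Type) (idx : R) (op : Monoid.law idx) n (F : nat -> R) :
  \big[op/idx]_(c < n + 4) F c =
  op (F 0%N) (op (F 1%N) (op (F 2%N) (op (\big[op/idx]_(j < n) F (j + 3)%N) (F (n + 3)%N)))).
Proof.
rewrite -(big_mkord xpredT F) big_ltn; last by lia.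
rewrite big_ltn; last by lia.
rewrite big_ltn; last by lia.
rewrite (_ : (n + 4 = (n + 3).+1)%N); last by lia.
rewrite big_nat_recr /=; last by lia.
rewrite (big_addn 0 (n + 3) 3) addnK big_mkord.
by [].
Qed.

Lemma sqrt_sq2 (R : rcfType) (k : nat) :
  Num.sqrt ((k%:R : R) ^+ 2 + k%:R ^+ 2) = k%:R * Num.sqrt 2.
Proof.
rewrite -mulr2n -(mulr_natl (k%:R ^+ 2) 2) sqrtrM ?ler0n // sqrtr_sqr ger0_norm ?ler0n //.
by rewrite mulrC.
Qed.

Section Main.
Variables (R : rcfType) (n : nat) (gT : finGroupType) (a b : gT).
Hypotheses (n2 : (2 <= n)%N) (cardG : #|gT| = (8 * n)%N)
  (gen : <<[set a; b]>>%g = [set: gT]) (a4n : (a ^+ (4 * n) = 1)%g) (b2 : (b ^+ 2 = 1)%g)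
  (ba : (b * a = a ^+ (2 * n - 1) * b)%g).

Let cG := cellG n a b.
Let cG_lt := cellG_lt n2 cardG gen a4n b2 ba.
Let adjE := adj_cell n2 cardG gen a4n b2 ba.
Let degE := deg_cell n2 cardG gen a4n b2 ba.
Let C0 := CN0 n2 cardG gen a4n b2 ba.
Let C1 := CN1 n2 cardG gen a4n b2 ba.
Let C2 := CN2 n2 cardG gen a4n b2 ba.
Let Cp := CNp n2 cardG gen a4n b2 ba.
Let Cl := CNl n2 cardG gen a4n b2 ba.
Let cphi := cell_phi n2 cardG gen a4n b2 ba.

Definition cellO (x : gT) : 'I_(n + 4) := Ordinal (cG_lt x).

Definition repN (c : nat) : nat * bool :=
  if c == 0%N then (0%N, false) else if c == 1%N then ((2 * n)%N, false)
  else if c == 2%N then (1%N, false) else if (c <= n + 2)%N then ((2 * (c - 3) + 1)%N, true)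
  else (0%N, true).

Definition repO (c : 'I_(n + 4)) : gT := phi a b (repN c).1 (repN c).2.

Lemma repOK : cancel repO cellO.
Proof.
move=> c; apply: val_inj => /=; rewrite /repO /cG cphi.
  move: (ltn_ord c); rewrite /repN; do ? case: ifPn; move=> *; rewrite /= /cellN;
  do ? case: ifPn; move=> *; lia.
by move: (ltn_ord c); rewrite /repN; do ! case: ifPn; move=> *; rewrite /=; lia.
Qed.

Definition MN (c c' : nat) : R :=
  if Acell n c c' then Num.sqrt ((dN n c)%:R ^+ 2 + (dN n c')%:R ^+ 2) else 0.

Lemma somborE : sombor_matrix R (@enh_power_adj gT) =
  \matrix_(i, j) ((enum_val i != enum_val j)%:R
      * (fun c c' : 'I_(n + 4) => MN c c') (cellO (enum_val i)) (cellO (enum_val j))).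
Proof.
apply/matrixP => i j; rewrite !mxE adjE !degE /MN /=.
by case: (enum_val i != enum_val j); case: (Acell _ _ _); rewrite /= ?mul1r ?mul0r.
Qed.

Lemma cardO (c : 'I_(n + 4)) : #|[set u | cellO u == c]| = CN n a b c.
Proof. by apply: eq_card => u; rewrite !inE -val_eqE. Qed.


Definition CNv (c : nat) : nat :=
  if c == 0%N then 1%N else if c == 1%N then 1%N else if c == 2%N then (4 * n - 2)%N
  else if (c <= n + 2)%N then 2%N else (2 * n)%N.

Lemma CN_val c : (c < n + 4)%N -> CN n a b c = CNv c.
Proof.
move=> hc; rewrite /CNv; case: ifPn => [/eqP->|c0]; first exact: C0.
case: ifPn => [/eqP->|c1]; first exact: C1.
case: ifPn => [/eqP->|c2]; first exact: C2.
case: ifPn => cp.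
  have [j -> jn] : exists2 j, c = (j + 3)%N & (j < n)%N by exists (c - 3)%N; lia.
  exact: Cp.
have -> : c = (n + 3)%N by lia.
exact: Cl.
Qed.

Lemma QE : \matrix_(r, c) ((#|[set u | cellO u == c]| - (r == c))%:R * MN c r) = Qmat R n.
Proof.
apply/matrixP => r c; rewrite !mxE cardO CN_val //= -val_eqE /=.
move: (nat_of_ord r) (nat_of_ord c) (ltn_ord r) (ltn_ord c) => {r c} r c hr hc.
rewrite /MN /Acell /dN /CNv.
have [<-|rc] := eqVneq r c.
all: do ? (case: ifPn => ?; try (exfalso; lia)).
all: rewrite /= ?subn0 ?mul1r ?mul0r ?mulr0 ?mulr1n -?mul2n; try done.
all: try by rewrite addrC.
  by rewrite sqrt_sq2 mulrA -natrM (_ : (4 * n - 2 - 1 = 4 * n - 3)%N) //; lia.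
exact: (sqrt_sq2 R 3).
Qed.


Lemma prodE : \prod_(c < n + 4) ('X + (MN c c)%:P) ^+ (#|[set u | cellO u == c]|.-1) =
  ('X + ((4 * n - 1)%:R * Num.sqrt 2)%:P) ^+ (4 * n - 3)
    * 'X ^+ (2 * n - 1) * ('X + (3 * Num.sqrt 2)%:P) ^+ n.
Proof.
rewrite (eq_bigr (fun c : 'I_(n + 4) => ('X + (MN c c)%:P) ^+ (CNv c).-1)); last first.
  by move=> c _; rewrite cardO CN_val.
rewrite (big_split5 _ n (fun c => ('X + (MN c c)%:P) ^+ (CNv c).-1)).
rewrite /= !expr0 !mul1r.
rewrite (eq_bigr (fun _ => 'X + (3 * Num.sqrt 2)%:P)); last first.
  move=> j _; have := ltn_ord j => jn.
  rewrite (_ : (CNv (j + 3)).-1 = 1%N); last by rewrite /CNv; do ? case: ifPn; move=> *; lia.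
  rewrite expr1 /MN ifT; last by rewrite /Acell; lia.
  rewrite (_ : dN n (j + 3) = 3%N); last by rewrite /dN; do ? case: ifPn; move=> *; lia.
  by rewrite (sqrt_sq2 R 3).
rewrite prodr_const card_ord.
have e3 : (CNv (n + 3)).-1 = (2 * n - 1)%N by rewrite /CNv; do ? case: ifPn; move=> *; lia.
have m3 : MN (n + 3) (n + 3) = 0.
  by rewrite /MN ifF //; apply/negbTE; rewrite /Acell; lia.
rewrite e3 m3 addr0.
have e2 : (CNv 2).-1 = (4 * n - 3)%N by rewrite /CNv /=; lia.
rewrite e2 /MN /= sqrt_sq2.
rewrite -!mulrA; congr (_ * _); rewrite mulrC.
by [].
Qed.

Lemma main : char_poly (sombor_matrix R (@enh_power_adj gT)) =
    ('X + ((4 * n - 1)%:R * Num.sqrt 2)%:P) ^+ (4 * n - 3)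
    * 'X ^+ (2 * n - 1)
    * ('X + (3 * Num.sqrt 2)%:P) ^+ n
    * char_poly (Qmat R n).
Proof.
rewrite somborE (equit2 (fun c c' : 'I_(n + 4) => MN c c') repOK) /= QE prodE.
by rewrite mulrC.
Qed.
End Main.

Unset Implicit Arguments.

Theorem theorem5p4 (R : rcfType) (n : nat) (gT : finGroupType) (a b : gT) :
  (2 <= n)%N ->
  #|gT| = (8 * n)%N ->
  <<[set a; b]>>%g = [set: gT] ->
  (a ^+ (4 * n) = 1)%g -> (b ^+ 2 = 1)%g ->
  (b * a = a ^+ (2 * n - 1) * b)%g ->
  char_poly (sombor_matrix R (@enh_power_adj gT)) =
    ('X + ((4 * n - 1)%:R * Num.sqrt 2)%:P) ^+ (4 * n - 3)
    * 'X ^+ (2 * n - 1)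
    * ('X + (3 * Num.sqrt 2)%:P) ^+ n
    * char_poly (Qmat R n).
Proof. move=> h1 h2 h3 h4 h5 h6; exact: (main R h1 h2 h3 h4 h5 h6). Qed.
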